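(* Let $u_*$ be the unique solution in $(0,1)$ of the equation $\ln\frac{1-u}{-\ln u}-1-\frac12\frac{(1+u)\ln u}{1-u}=0$. Then $$F(\delta,u):=u^\delta-\Big(\frac12-\delta\Big)-\Big(\frac12+\delta\Big)u\ge0$$ for all $\delta\in(0,\frac12)$ and all $u\in[u_*,1]$.
   Context: Numerically $u_*=0.00505778\ldots$. *)

(* Defs.v *)
From Stdlib Require Import Reals.
Open Scope R_scope.

Definition Gstar (u : R) : R :=
  ln ((1 - u) / (- ln u)) - 1 - (1/2) * ((1 + u) * ln u / (1 - u)).

Definition F (delta u : R) : R :=
  Rpower u delta - (1/2 - delta) - (1/2 + delta) * u.

(* Main.v *)
Require Import Defs.
From Stdlib Require Import Reals Lra Psatz.
Open Scope R_scope.

Lemma ln_le_xm1 x : 0 < x -> ln x <= x - 1.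
Proof. intro Hx. pose proof (exp_ineq1_le (ln x)). rewrite exp_ln in H; lra. Qed.

Lemma exp_le_mono a b : a <= b -> exp a <= exp b.
Proof. intro H. destruct (Rle_lt_or_eq_dec _ _ H) as [h|h].
  - left; now apply exp_increasing.
  - subst; lra. Qed.

Lemma bern z d : 0 < z -> 0 <= d <= 1 -> exp (d * ln z) <= 1 + d * (z - 1).
Proof.
  intros Hz Hd. set (a := 1 + d * (z - 1)).
  assert (Ha : 0 < a).
  { unfold a. destruct (Rle_lt_or_eq_dec 0 d (proj1 Hd)) as [h|h].
    - nra.
    - subst; lra. }
  assert (H1 : ln (z * / a) <= z * / a - 1) by (apply ln_le_xm1; apply Rmult_lt_0_compat; auto; apply Rinv_0_lt_compat; auto).
  assert (H2 : ln (/ a) <= / a - 1) by (apply ln_le_xm1; apply Rinv_0_lt_compat; auto).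
  rewrite ln_mult in H1 by (auto; apply Rinv_0_lt_compat; auto).
  rewrite ln_Rinv in H1, H2 by auto.
  assert (Hk : d * (z * / a - 1) + (1 - d) * (/ a - 1) = 0) by (unfold a in *; field; lra).
  assert (d * ln z <= ln a).
  { assert (d * (ln z + - ln a) <= d * (z * / a - 1)) by (apply Rmult_le_compat_l; lra).
    assert ((1 - d) * (- ln a) <= (1 - d) * (/ a - 1)) by (apply Rmult_le_compat_l; lra).
    nra. }
  rewrite <- (exp_ln a) by auto. now apply exp_le_mono.
Qed.

Lemma conc u y d : 0 < u -> 0 < y -> 0 <= d <= 1 ->
  Rpower y d <= Rpower u d * (1 + d * (y / u - 1)).
Proof.
  intros Hu Hy Hd. unfold Rpower.
  assert (Hyu : 0 < y / u) by (apply Rdiv_lt_0_compat; auto).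
  replace y with (u * (y / u)) at 1 by (field; lra).
  rewrite ln_mult by auto. rewrite Rmult_plus_distr_l, exp_plus.
  apply Rmult_le_compat_l. left; apply exp_pos. now apply bern.
Qed.

Theorem lemma3p5 (ustar : R) :
  0 < ustar < 1 ->
  Gstar ustar = 0 ->
  (forall v : R, 0 < v < 1 -> Gstar v = 0 -> v = ustar) ->
  forall delta u : R, 0 < delta < 1/2 -> ustar <= u <= 1 -> 0 <= F delta u.
Proof.
  intros Hs HG _ d u Hd Hu.
  set (s := ustar) in *.
  set (L := ln s).
  assert (HL : L < 0) by (unfold L; rewrite <- ln_1; apply ln_increasing; lra).
  set (c := (1 - s) / (- L)).
  assert (Hc : 0 < c) by (unfold c; apply Rdiv_lt_0_compat; lra).
  assert (Hlc : ln c = 1 + 1/2 * ((1 + s) * L / (1 - s))).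
  { unfold Gstar in HG. fold L in HG. fold c in HG. lra. }
  assert (Hs1 : 0 <= Rpower s d - (1/2 - d) - (1/2 + d) * s).
  { set (d0 := ln c / L).
    assert (E : exp (d * L) = c * exp ((d - d0) * L)).
    { rewrite <- (exp_ln c) at 1 by auto. rewrite <- exp_plus. f_equal.
      unfold d0; field; lra. }
    unfold Rpower. fold L. rewrite E.
    pose proof (exp_ineq1_le ((d - d0) * L)) as Hx.
    assert (c * (1 + (d - d0) * L) <= c * exp ((d - d0) * L)) by (apply Rmult_le_compat_l; lra).
    assert (Z : c * (1 + (d - d0) * L) - (1/2 - d) - (1/2 + d) * s = 0).
    { unfold d0; rewrite Hlc; unfold c; field; lra. }
    lra. }
  assert (Hu0 : 0 < u) by lra.
  assert (Hd1 : 0 <= d <= 1) by lra.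
  pose proof (conc u s d Hu0 (proj1 Hs) Hd1) as A.
  pose proof (conc u 1 d Hu0 Rlt_0_1 Hd1) as B.
  assert (R1 : Rpower 1 d = 1) by (unfold Rpower; rewrite ln_1, Rmult_0_r, exp_0; auto).
  rewrite R1 in B.
  set (t := (1 - u) / (1 - s)).
  assert (Ht : 0 <= t <= 1).
  { assert (Hs0 : 0 < 1 - s) by lra.
    assert (Et : t * (1 - s) = 1 - u) by (unfold t; field; lra).
    split.
    - unfold t, Rdiv. apply Rmult_le_pos; [lra| left; apply Rinv_0_lt_compat; lra].
    - apply Rmult_le_reg_r with (1 - s); lra. }
  set (P := Rpower u d) in *.
  assert (Hts : t * s + (1 - t) = u) by (unfold t; field; lra).
  assert (HA : t * Rpower s d <= t * (P * (1 + d * (s / u - 1)))) by (apply Rmult_le_compat_l; lra).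
  assert (HB : (1 - t) * 1 <= (1 - t) * (P * (1 + d * (1 / u - 1)))) by (apply Rmult_le_compat_l; lra).
  assert (Id : t * (P * (1 + d * (s / u - 1))) + (1 - t) * (P * (1 + d * (1 / u - 1))) = P).
  { assert (Id0 : t * (P * (1 + d * (s / u - 1))) + (1 - t) * (P * (1 + d * (1 / u - 1))) = P * (1 + d * ((t * s + (1 - t)) / u - 1))) by (field; lra).
    rewrite Id0, Hts. field. lra. }
  assert (HF : t * (Rpower s d - (1/2 - d) - (1/2 + d) * s) >= 0) by nra.
  unfold F. fold P. rewrite <- Hts. nra.
Qed.
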